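(* For every positive integer $\ell$, there exists a tree $T$ such that $\gamma_t(T)-\chi_{\mu_2}(T)=\ell$.
   Context: $\gamma_t(T)$ is the total domination number: the minimum size of a set $D$ such that every vertex has a neighbor in $D$. A set $M\subseteq V(G)$ is a $2$-distance mutual-visibility set if for every two vertices $u,v\in M$ there exists a shortest $u,v$-path of length at most $2$ none of whose internal vertices lies in $M$. $\chi_{\mu_2}(G)$ is the minimum cardinality of a partition of $V(G)$ into $2$-distance mutual-visibility sets. *)

(* Defs.v *)
From mathcomp Require Import all_boot.
Set Implicit Arguments. Unset Strict Implicit. Unset Printing Implicit Defensive.

Section Graphs.
Variable T : finType.
Variable e : rel T.

Definition simple_graph : Prop := symmetric e /\ irreflexive e.

Definition acyclic : Prop := forall c : seq T, 3 <= size c -> ~ ucycle e c.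

Definition is_tree : Prop :=
  [/\ simple_graph, 0 < #|T|, (forall x y : T, connect e x y) & acyclic].

Definition total_dominating (D : {set T}) : Prop :=
  forall v : T, exists2 u, u \in D & e v u.

Definition is_total_domination_number (k : nat) : Prop :=
  (exists2 D : {set T}, total_dominating D & #|D| = k) /\
  (forall D : {set T}, total_dominating D -> k <= #|D|).

(* 2-distance mutual-visibility set: any two distinct vertices of M are at
   distance 1, or at distance 2 via a middle vertex outside M (a shortest
   path of length <= 2 with no internal vertex in M). *)
Definition mv2_set (M : {set T}) : Prop :=
  forall u v, u \in M -> v \in M -> u != v ->
    e u v \/ exists w, [/\ w \notin M, e u w & e w v].

Definition mv2_partition (P : {set {set T}}) : Prop :=
  partition P [set: T] /\ forall M, M \in P -> mv2_set M.

Definition is_chi_mu2 (k : nat) : Prop :=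
  (exists2 P : {set {set T}}, mv2_partition P & #|P| = k) /\
  (forall P : {set {set T}}, mv2_partition P -> k <= #|P|).
End Graphs.

(* Main.v *)
Require Import Defs.
From mathcomp Require Import all_boot.
From mathcomp Require Import zify.
Set Implicit Arguments. Unset Strict Implicit. Unset Printing Implicit Defensive.


Definition par (v : nat) := if v %% 3 == 1 then 0 else v.-1.
Definition adj (u v : nat) := ((0 < u) && (par u == v)) || ((0 < v) && (par v == u)).

Ltac sadj := rewrite /adj /par; repeat case: ifP; lia.

Lemma par_le v : par v <= v. Proof. rewrite /par; case: ifP; lia. Qed.
Lemma par_lt v : 0 < v -> par v < v. Proof. rewrite /par; case: ifP; lia. Qed.
Lemma adj_sym u v : adj u v = adj v u. Proof. by rewrite /adj orbC. Qed.
Lemma adj_irr u : adj u u = false. Proof. sadj. Qed.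
Lemma adj_gt u v : v < u -> adj u v -> par u = v.
Proof. move=> h; rewrite /adj => /orP[/andP[_ /eqP //]|/andP[_ /eqP h2]].
have := par_le v; lia. Qed.

Definition E N : rel 'I_N.+1 := fun u v => adj u v.

Lemma conn0 N (x : 'I_N.+1) : connect (@E N) x ord0.
Proof.
suff H : forall m (x : 'I_N.+1), x <= m -> connect (@E N) x ord0 by apply: (H x).
elim=> [|m IH] {}x Hx.
  by have -> : x = ord0 by apply/val_inj => /=; lia.
case: (posnP x) => [x0|xpos].
  by have -> : x = ord0 by apply/val_inj => /=; lia.
have hp : par x < N.+1 by have := par_le x; have := ltn_ord x; lia.
apply: (connect_trans (y := inord (par x))).
  by apply: connect1; rewrite /E /adj inordK // xpos eqxx.
apply: IH; rewrite inordK //; have := par_lt xpos; lia.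
Qed.

Lemma acyc N : acyclic (@E N).
Proof.
move=> c Hc /andP[Hcy Hu].
have x0c : head ord0 c \in c by case: c Hc {Hcy Hu} => //= *; rewrite mem_head.
have [m mc Hmax] := @arg_maxnP _ (head ord0 c) (fun i => i \in c) val x0c.
case: (rot_to mc) => i s' Hrot.
have Hcy' : cycle (@E N) (m :: s') by rewrite -Hrot rot_cycle.
have Hu' : uniq (m :: s') by rewrite -Hrot rot_uniq.
have Hsz : 3 <= size (m :: s') by rewrite -Hrot size_rot.
have Hin j : j \in m :: s' -> val j <= val m by rewrite -Hrot mem_rot; exact: Hmax.
clear Hrot; case: s' Hcy' Hu' Hsz Hin => [|y [|z q]] //= Hcy' Hu' _ Hin.
move: Hcy' => /andP[Hmy] /andP[_]; rewrite rcons_path => /andP[_ Hlm].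
set w := last z q in Hlm.
have wq : w \in z :: q by rewrite /w; exact: mem_last.
move: Hu'; rewrite !inE => /andP[/norP[my /norP[mz mq]] /andP[/norP[yz yq] _]].
have ym : val y < val m.
  have := Hin y; rewrite !inE eqxx orbT => /(_ isT).
  by rewrite leq_eqVlt => /orP[/eqP/val_inj h|//]; rewrite h eqxx in my.
have wm : val w < val m.
  have : w \in [:: m, y, z & q] by rewrite inE in_cons wq !orbT.
  move/Hin; rewrite leq_eqVlt => /orP[/eqP/val_inj h|//].
  by move: wq; rewrite h inE (negbTE mz) (negbTE mq).
have h1 := adj_gt ym Hmy.
rewrite /E adj_sym in Hlm.
have h2 := adj_gt wm Hlm.
have ey : y = w by apply/val_inj; rewrite -h1 -h2.
by move: wq; rewrite -ey inE (negbTE yz) (negbTE yq).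
Qed.

Lemma tree N : is_tree (@E N).
Proof.
split.
- by split; [move=> u v; exact: adj_sym | move=> u; exact: adj_irr].
- by rewrite card_ord.
- move=> x y; apply: (connect_trans (conn0 x)).
  rewrite (sym_connect_sym (e := @E N)); first exact: conn0.
  by move=> u v; exact: adj_sym.
- exact: acyc.
Qed.

Lemma M1 i w : adj (3*i+3) w -> w = 3*i+2. Proof. sadj. Qed.
Lemma M2 i w : adj (3*i+2) w -> w = 3*i+1 \/ w = 3*i+3. Proof. sadj. Qed.
Lemma N1 i j w : i != j -> adj (3*i+3) w -> adj w (3*j+3) -> False. Proof. sadj. Qed.
Lemma N1' i j : i != j -> ~~ adj (3*i+3) (3*j+3). Proof. sadj. Qed.
Lemma N2 i w : adj 0 w -> adj w (3*i+3) -> False. Proof. sadj. Qed.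
Lemma N2' i : ~~ adj 0 (3*i+3). Proof. sadj. Qed.
Lemma N3 i w : adj (3*i+3) w -> adj w (3*i+1) -> w = 3*i+2. Proof. sadj. Qed.
Lemma N3' i : ~~ adj (3*i+3) (3*i+1). Proof. sadj. Qed.
Lemma N4 i j y w : i != j -> (y == 3*i+1) || (y == 3*i+2) ->
  adj (3*j+3) w -> adj w y -> False. Proof. sadj. Qed.
Lemma N4' i j y : i != j -> (y == 3*i+1) || (y == 3*i+2) -> ~~ adj (3*j+3) y. Proof. sadj. Qed.
Lemma N5 u v w : (u == 1) || (u == 2) -> (v == 4) || (v == 5) ->
  adj u w -> adj w v -> w = 0. Proof. sadj. Qed.
Lemma N5' u v : (u == 1) || (u == 2) -> (v == 4) || (v == 5) -> ~~ adj u v. Proof. sadj. Qed.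

Definition lab k v := if v <= 1 then k.+1 else if v %% 3 == 1 then k else (v.-1) %/ 3.
Lemma lab_mv k u v : u < (3*k).+1 -> v < (3*k).+1 -> lab k u = lab k v -> u != v ->
  adj u v || [&& u %% 3 == 1, v %% 3 == 1, 1 < u & 1 < v].
Proof. rewrite /lab /adj /par; repeat case: ifP; lia. Qed.
Lemma lab_lt k v : v < (3*k).+1 -> lab k v < k.+2.
Proof. rewrite /lab; repeat case: ifP; lia. Qed.

Definition vt k m : 'I_(3*k).+1 := inord m.
Lemma vtK k m : m <= 3*k -> val (vt k m) = m.
Proof. by move=> h; apply: inordK. Qed.
Lemma vtK' k (i : 'I_k) c : c <= 3 -> val (vt k (3*i+c)) = 3*i+c.
Proof. move=> h; apply: vtK; have := ltn_ord i; lia. Qed.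

Lemma card_cnt m (p : pred nat) : #|[set v : 'I_m | p (val v)]| = count p (iota 0 m).
Proof.
rewrite cardsE cardE /enum_mem size_filter -enumT -val_enum_ord count_map.
by apply: eq_count.
Qed.

Lemma cnt3 k : count (fun v => v %% 3 != 0) (iota 0 (3*k).+1) = 2*k.
Proof.
elim: k => [//|k IH].
have -> : (3 * k.+1).+1 = (3*k).+1 + 3 by lia.
rewrite iotaD count_cat IH /=.
have -> : (0 + (3 * k).+1) %% 3 != 0 by lia.
have -> : (0 + (3 * k).+1).+1 %% 3 != 0 by lia.
have -> : (0 + (3 * k).+1).+2 %% 3 != 0 = false by lia.
lia.
Qed.

Definition Dset k := [set v : 'I_(3*k).+1 | val v %% 3 != 0].

Lemma adjE u v : adj u v = ((0<u) && ((u%%3==1) && (v==0) || (u%%3!=1) && (v == u.-1)))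
  || ((0<v) && ((v%%3==1) && (u==0) || (v%%3!=1) && (u == v.-1))).
Proof. rewrite /adj /par; repeat case: ifP; lia. Qed.

Definition nbf (v : nat) := if v == 0 then 1 else if v %% 3 == 1 then v.+1 else v.-1.
Lemma nbP k v : 0 < k -> v < (3*k).+1 -> [&& nbf v <= 3*k, nbf v %% 3 != 0 & adj v (nbf v)].
Proof. rewrite adjE /nbf; repeat case: ifP; lia. Qed.

Lemma D_td k : 0 < k -> total_dominating (@E (3*k)) (Dset k).
Proof.
move=> hk v; have /and3P[h1 h2 h3] := nbP hk (ltn_ord v).
by exists (vt k (nbf v)); rewrite ?inE /E vtK.
Qed.

Lemma D_card k : #|Dset k| = 2*k.
Proof. by rewrite /Dset (@card_cnt _ (fun v => v %% 3 != 0)) cnt3. Qed.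

Lemma gam_lb k (D : {set 'I_(3*k).+1}) : total_dominating (@E (3*k)) D -> 2*k <= #|D|.
Proof.
move=> hD.
have ha (i : 'I_k) : vt k (3*i+2) \in D.
  have [u uD] := hD (vt k (3*i+3)); rewrite /E vtK' // => /M1 hu.
  suff -> : vt k (3*i+2) = u by [].
  by apply/val_inj; rewrite vtK'.
have hxb (i : 'I_k) : vt k (3*i+1) \notin D -> vt k (3*i+3) \in D.
  move=> hx; have [u uD] := hD (vt k (3*i+2)); rewrite /E vtK' // => /M2 [hu|hu].
    suff h : vt k (3*i+1) = u by rewrite h uD in hx.
    by apply/val_inj; rewrite vtK'.
  suff -> : vt k (3*i+3) = u by [].
  by apply/val_inj; rewrite vtK'.
pose g (p : 'I_k * bool) := let: (i, b) := p in
  if b then (if vt k (3*i+1) \in D then vt k (3*i+1) else vt k (3*i+3)) else vt k (3*i+2).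
have ginj : injective g.
  move=> [i b] [j b'] /=.
  case: b; case: b'; repeat case: ifP => _; move=> /(congr1 val); rewrite !vtK' // => h;
    try lia; congr pair; apply/ord_inj; lia.
have -> : 2*k = #|g @: setT| by rewrite card_imset // cardsT card_prod !card_ord card_bool; lia.
apply: subset_leq_card; apply/subsetP => _ /imsetP[[i b] _ ->] /=.
case: b => //; case: ifP => // /negbT; exact: hxb.
Qed.

Lemma gam k : 0 < k -> is_total_domination_number (@E (3*k)) (2*k).
Proof.
move=> hk; split; last exact: gam_lb.
by exists (Dset k); [exact: D_td | exact: D_card].
Qed.

Lemma vtKn k m : m <= 3*k -> nat_of_ord (vt k m) = m.
Proof. by move=> h; apply: inordK. Qed.

Definition fl k (v : 'I_(3*k).+1) : 'I_k.+2 := inord (lab k v).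
Arguments fl : clear implicits.
Lemma flK k (v : 'I_(3*k).+1) : val (fl k v) = lab k v.
Proof. by apply: inordK; apply: lab_lt; exact: ltn_ord. Qed.

Lemma lab0 k : lab k 0 = k.+1. Proof. by []. Qed.
Lemma labx k u : u %% 3 == 1 -> 1 < u -> lab k u = k.
Proof. rewrite /lab; repeat case: ifP; lia. Qed.
Lemma laba k j : lab k (3*j+2) = j.
Proof. rewrite /lab; repeat case: ifP; lia. Qed.
Lemma adjx0 u : u %% 3 == 1 -> adj u 0. Proof. rewrite adjE; lia. Qed.

Definition sv k (j : nat) := if j == k.+1 then 0 else if j == k then 4 else 3*j+2.
Lemma svP k j : 2 <= k -> j < k.+2 -> (sv k j <= 3*k) && (lab k (sv k j) == j).
Proof.
move=> h1 h2; rewrite /sv; case: ifP => /eqP e1; first by rewrite lab0 e1 eqxx.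
case: ifP => /eqP e2; first by rewrite labx // e2 eqxx; lia.
rewrite laba eqxx; lia.
Qed.

Lemma chi_ub k : 2 <= k ->
  exists2 P, mv2_partition (@E (3*k)) P & #|P| = k.+2.
Proof.
move=> hk.
have surj (j : 'I_k.+2) : exists v, fl k v = j.
  have /andP[h1 /eqP h2] := svP hk (ltn_ord j).
  by exists (vt k (sv k j)); apply/val_inj; rewrite flK vtK.
exists (preim_partition (fl k) [set: _]).
  split; first exact: preim_partitionP.
  move=> M /imsetP[x _ ->] u v; rewrite !inE /= => /eqP hu /eqP hv huv.
  have hl : lab k u = lab k v by rewrite -!flK -hu -hv.
  case/orP: (lab_mv (ltn_ord u) (ltn_ord v) hl huv) => [h|/and4P[u1 v1 u2 v2]].
    by left.
  right; exists ord0; split.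
  - rewrite !inE /=; apply/negP => /eqP /(congr1 val); rewrite !flK lab0.
    have -> : lab k x = lab k u by rewrite -!flK hu.
    rewrite labx //; lia.
  - by rewrite /E /= adjx0.
  - by rewrite /E /= adj_sym adjx0.
pose S (j : 'I_k.+2) := [set y | fl k y == j].
have -> : preim_partition (fl k) [set: _] = S @: (fl k @: [set: _]).
  rewrite /preim_partition /equivalence_partition -imset_comp.
  apply: eq_imset => x; apply/setP => y; rewrite !inE /=; by rewrite eq_sym.
have -> : fl k @: [set: _] = [set: 'I_k.+2].
  apply/setP => j; rewrite inE; have [v hv] := surj j; apply/imsetP; by exists v.
rewrite card_imset ?cardsT ?card_ord //.
move=> j j' hS; have [v hv] := surj j.
have : v \in S j by rewrite inE hv.
by rewrite hS inE hv => /eqP.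
Qed.

Lemma chi_lb k : 2 <= k -> forall P, mv2_partition (@E (3*k)) P -> k.+2 <= #|P|.
Proof.
move=> hk P [hpart hmv]; case/and3P: hpart => /eqP Hcov Htriv _.
pose B := pblock P.
have inB v : v \in B v by rewrite mem_pblock Hcov inE.
have BP v : B v \in P by apply: pblock_mem; rewrite Hcov inE.
have sep (u v t : 'I_(3*k).+1) : nat_of_ord u != nat_of_ord v -> ~~ adj u v ->
    (forall w : 'I_(3*k).+1, adj u w -> adj w v -> nat_of_ord w = nat_of_ord t) ->
    t \in B u -> v \notin B u.
  move=> huv hna hc tB; apply/negP => vB.
  have huv' : u != v by apply: contra huv => /eqP ->.
  case: (hmv _ (BP u) u v (inB u) vB huv') => [h|[w [wn h1 h2]]].
    by rewrite /E in h; rewrite h in hna.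
  have /ord_inj ewt := hc w h1 h2.
  by rewrite ewt tB in wn.
have sepf (u v : 'I_(3*k).+1) : nat_of_ord u != nat_of_ord v -> ~~ adj u v ->
    (forall w : nat, adj u w -> adj w v -> False) -> v \notin B u.
  move=> huv hna hc; apply: (sep u v u huv hna _ (inB u)).
  by move=> w h1 h2; case: (hc w h1 h2).
have Bd (u v : 'I_(3*k).+1) : v \notin B u -> B u != B v.
  by move=> h; apply/eqP => e; rewrite e inB in h.
pose bn i := vt k (3*i+3).
have bK i : i < k -> nat_of_ord (bn i) = 3*i+3 by move=> hi; apply: vtKn; lia.
have Hbb i j : i < k -> j < k -> i != j -> B (bn i) != B (bn j).
  move=> hi hj hij; apply: Bd; apply: sepf; rewrite ?bK //.
  - lia.
  - exact: N1'.
  - by move=> w; apply: N1.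
have Hcb i : i < k -> B ord0 != B (bn i).
  move=> hi; apply: Bd; apply: sepf; rewrite ?bK //=.
  - lia.
  - exact: N2'.
  - by move=> w; apply: N2.
have Hy i (y : 'I_(3*k).+1) : i < k -> (nat_of_ord y == 3*i+1) || (nat_of_ord y == 3*i+2) ->
    y \notin B (bn i) -> forall j, j < k -> B y != B (bn j).
  move=> hi hy yB j hj; case: (eqVneq i j) => [<-|hij].
    by rewrite eq_sym; apply: Bd.
  rewrite eq_sym; apply: Bd; apply: sepf; rewrite ?bK //.
  - lia.
  - exact: (N4' hij).
  - by move=> w; apply: (N4 hij).
have exy i : i < k -> exists2 y : 'I_(3*k).+1,
    (nat_of_ord y == 3*i+1) || (nat_of_ord y == 3*i+2) & y \notin B (bn i).
  move=> hi; case: (boolP (vt k (3*i+2) \in B (bn i))) => h.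
  - exists (vt k (3*i+1)); first by rewrite vtKn ?eqxx //; lia.
    apply: (sep _ _ (vt k (3*i+2))) => //; rewrite ?bK ?vtKn //; try lia.
    + exact: N3'.
    + by move=> w; apply: N3.
  - exists (vt k (3*i+2)) => //; rewrite vtKn ?eqxx ?orbT //; lia.
have [y0 hy0 y0B] := exy 0 ltac:(lia).
have [y1 hy1 y1B] := exy 1 ltac:(lia).
have [y hyc hyb] : exists2 y, B y != B ord0 & forall j, j < k -> B y != B (bn j).
  case: (eqVneq (B y0) (B ord0)) => h0; last by exists y0 => //; apply: (Hy 0 y0 ltac:(lia) hy0 y0B).
  case: (eqVneq (B y1) (B ord0)) => h1; last by exists y1 => //; apply: (Hy 1 y1 ltac:(lia) hy1 y1B).
  exfalso.
  have : y1 \notin B y0.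
    apply: (sep _ _ ord0); rewrite ?h0 ?inB //.
    - lia.
    - by apply: N5'; lia.
    - by move=> w hw1 hw2; apply: (N5 _ _ hw1 hw2); lia.
  by rewrite h0 -h1 inB.
pose g (j : 'I_k.+2) := if j < k then B (bn j) else if j == k :> nat then B ord0 else B y.
have ginj : injective g.
  move=> j j' hg; apply/ord_inj.
  have hj := ltn_ord j; have hj' := ltn_ord j'.
  move: hg; rewrite /g.
  case: (ltnP j k) => h1; case: (ltnP j' k) => h2.
  - move=> e; case: (eqVneq (nat_of_ord j) j') => // hne.
    by move: (Hbb _ _ h1 h2 hne); rewrite e eqxx.
  - case: ifP => h3 e.
      by move: (Hcb _ h1); rewrite e eqxx.
    by move: (hyb _ h1); rewrite e eqxx.
  - case: ifP => h3 e.
      by move: (Hcb _ h2); rewrite e eqxx.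
    by move: (hyb _ h2); rewrite e eqxx.
  - case: ifP => /eqP h3; case: ifP => /eqP h4 e; try lia.
      by move: hyc; rewrite e eqxx.
    by move: hyc; rewrite e eqxx.
have -> : k.+2 = #|g @: setT| by rewrite card_imset // cardsT card_ord.
apply: subset_leq_card; apply/subsetP => _ /imsetP[j _ ->].
by rewrite /g; repeat case: ifP.
Qed.

Theorem mainTheorem8 : forall l : nat, 0 < l ->
  exists (n : nat) (e : rel 'I_n),
    is_tree e /\
    exists g c : nat,
      [/\ is_total_domination_number e g, is_chi_mu2 e c & g = c + l].
Proof.
move=> l hl.
have hk : 2 <= l.+2 by [].
exists (3 * l.+2).+1, (@E (3 * l.+2)); split; first exact: tree.
exists (2 * l.+2), l.+4; split.
- by apply: gam.
- split; [exact: chi_ub | exact: chi_lb].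
- lia.
Qed.
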